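(* Let $V$ be a crossed module and $M$ an abelian $\pi_0(V)$-module. Then $H^1(V,M)\cong H^1(\pi_0(V),M)$.
   Context: A crossed module $V$: group $G_V$, group $M_V$ with left $G_V$-action ${}^gm$, homomorphism $\mu:M_V\to G_V$ with $\mu({}^gm)=g\mu(m)g^{-1}$ and ${}^{\mu(n)}m=nmn^{-1}$; $\pi_0(V)=G_V/\mu(M_V)$, $\bar g$ the class of $g$. The cochain complex of $V$ with coefficients in $M$ begins $C^0=M$, $C^1=\mathrm{Map}(G_V,M)$, $C^2=\mathrm{Map}(M_V\times G_V\times G_V,M)$ with $(dc)(g)=c-\bar g\cdot c$ and $(dc)(m,h,g)=c(\mu(m)h)-c(hg)+\bar h\cdot c(g)$; $H^1(V,M)$ is its first cohomology. $H^1(\pi_0(V),M)$ is ordinary group cohomology. *)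

(* Defs.v *)
From HB Require Import structures.
From mathcomp Require Import all_boot all_order all_algebra.
Set Implicit Arguments. Unset Strict Implicit. Unset Printing Implicit Defensive.
Import GRing.Theory.

Definition is_crossed_module (GV MV : groupType)
    (act : GV -> MV -> MV) (mu : MV -> GV) : Prop :=
  [/\
      (forall m, act 1%g m = m),
      (forall g h m, act (g * h)%g m = act g (act h m)),
      (forall g m n, act g (m * n)%g = (act g m * act g n)%g),
      (forall m n, mu (m * n)%g = (mu m * mu n)%g) &
      (forall g m, mu (act g m) = (g * mu m * g^-1)%g) /\
      (forall n m, act (mu n) m = (n * m * n^-1)%g)].

(* Q together with p : GV -> Q is (a model of) the quotient group
   GV / mu(MV): p is a surjective homomorphism whose kernel is mu(MV).
   The class of g is p g. *)
Definition is_pi0 (GV MV Q : groupType) (mu : MV -> GV) (p : GV -> Q) : Prop :=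
  [/\ (forall g h, p (g * h)%g = (p g * p h)%g),
      (forall x : Q, exists g, p g = x) &
      (forall g, p g = 1%g <-> exists m, g = mu m)].

Definition is_module (Q : groupType) (M : zmodType) (a : Q -> M -> M) : Prop :=
  [/\ (forall x, a 1%g x = x),
      (forall q r x, a (q * r)%g x = a q (a r x)) &
      (forall q x y, a q (x + y)%R = (a q x + a q y)%R)].

Local Open Scope ring_scope.

Definition dV0 (GV Q : groupType) (M : zmodType) (p : GV -> Q)
    (a : Q -> M -> M) (c : M) : GV -> M :=
  fun g => c - a (p g) c.

Definition dV1 (GV MV Q : groupType) (M : zmodType) (mu : MV -> GV)
    (p : GV -> Q) (a : Q -> M -> M) (c : GV -> M) : MV -> GV -> GV -> M :=
  fun m h g => c (mu m * h)%g - c (h * g)%g + a (p h) (c g).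

Definition ZV1 (GV MV Q : groupType) (M : zmodType) (mu : MV -> GV)
    (p : GV -> Q) (a : Q -> M -> M) (c : GV -> M) : Prop :=
  forall m h g, dV1 mu p a c m h g = 0.

Definition BV1 (GV Q : groupType) (M : zmodType) (p : GV -> Q)
    (a : Q -> M -> M) (c : GV -> M) : Prop :=
  exists c0 : M, forall g, c g = dV0 p a c0 g.

Definition dQ0 (Q : groupType) (M : zmodType) (a : Q -> M -> M) (c : M)
  : Q -> M := fun x => a x c - c.

Definition dQ1 (Q : groupType) (M : zmodType) (a : Q -> M -> M) (f : Q -> M)
  : Q -> Q -> M := fun x y => a x (f y) - f (x * y)%g + f x.

Definition ZQ1 (Q : groupType) (M : zmodType) (a : Q -> M -> M) (f : Q -> M)
  : Prop := forall x y, dQ1 a f x y = 0.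

Definition BQ1 (Q : groupType) (M : zmodType) (a : Q -> M -> M) (f : Q -> M)
  : Prop := exists c0 : M, forall x, f x = dQ0 a c0 x.

(* Given subgroups B1 <= Z1 of Map(X,M) and B2 <= Z2 of Map(Y,N), an
   isomorphism of abelian groups Z1/B1 ~= Z2/B2 is the same as an additive
   map phi : Z1 -> Z2 inducing a bijection on the quotients, i.e. with
   phi^-1(B2) = B1 (injectivity) and Z2 = phi(Z1) + B2 (surjectivity). *)
Definition subquot_iso (X Y : Type) (M N : zmodType)
    (Z1 B1 : (X -> M) -> Prop) (Z2 B2 : (Y -> N) -> Prop) : Prop :=
  exists phi : (X -> M) -> (Y -> N),
  [/\ (forall c, Z1 c -> Z2 (phi c)),
      (forall c c', Z1 c -> Z1 c' ->
          phi (fun x => c x + c' x) = (fun y => phi c y + phi c' y)),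
      (forall c, Z1 c -> (B2 (phi c) <-> B1 c)) &
      (forall f, Z2 f -> exists2 c, Z1 c & B2 (fun y => f y - phi c y))].

(* Main.v *)
Require Import Defs.
From HB Require Import structures.
From mathcomp Require Import all_boot all_order all_algebra.
From Stdlib Require Import ClassicalEpsilon.
Import GRing.Theory.
Local Open Scope ring_scope.

Lemma helpZ (M : zmodType) (x y z : M) : x - y + z = 0 -> y = x + z.
Proof. by move=> H; apply/eqP; rewrite eq_sym -subr_eq0 addrAC H. Qed.

Theorem corollary3p7 (GV MV : groupType) (act : GV -> MV -> MV) (mu : MV -> GV)
    (Q : groupType) (p : GV -> Q) (M : zmodType) (a : Q -> M -> M) :
  is_crossed_module act mu ->
  is_pi0 mu p ->
  is_module a ->
  subquot_iso (ZV1 mu p a) (BV1 p a) (ZQ1 a) (BQ1 a).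
Proof.
move=> _ [pM psurj pker] [a1 aM aD].
have p1 : p 1%g = 1%g.
  by apply: (mulgI (p 1%g)); rewrite mulg1 -pM mulg1.
have [m0 m0E] : exists m, (1 = mu m)%g by apply/pker.
have a0 q : a q 0 = 0 by apply: (addrI (a q 0)); rewrite -aD !addr0.
have aN q x : a q (- x) = - a q x.
  by apply: (addrI (a q x)); rewrite -aD !subrr a0.
pose s x := proj1_sig (constructive_indefinite_description _ (psurj x)).
have sP x : p (s x) = x by rewrite /s; case: constructive_indefinite_description.
have cross c : ZV1 mu p a c -> forall h g, c (h * g)%g = c h + a (p h) (c g).
  by move=> Zc h g; have := Zc m0 h g; rewrite /dV1 -m0E mul1g => /helpZ.
have inv c : ZV1 mu p a c -> forall m h, c (mu m * h)%g = c h.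
  move=> Zc m h; have := Zc m h 1%g; rewrite /dV1 mulg1 => /helpZ.
  have := cross c Zc h 1%g; rewrite mulg1 => E1 E2.
  by apply: (addIr (a (p h) (c 1%g))); rewrite -E2.
have fac c : ZV1 mu p a c -> forall g g', p g = p g' -> c g = c g'.
  move=> Zc g g' E.
  have k1 : p (g * g'^-1)%g = 1%g.
    apply: (mulIg (p g')); rewrite -pM mulgVK mul1g //.
  have [m mE] := proj1 (pker _) k1.
  by rewrite -(inv c Zc m g') -mE mulgVK.
exists (fun c x => c (s x)); split.
- move=> c Zc x y; rewrite /dQ1.
  rewrite (fac c Zc (s (x * y)%g) (s x * s y)%g); last by rewrite pM !sP.
  by rewrite (cross c Zc) sP opprD addrA addrAC subrr add0r addNr.
- by [].
- move=> c Zc; split.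
  + case=> c0 Hc0; exists (- c0) => g; rewrite /dV0 aN opprK.
    rewrite (fac c Zc g (s (p g))) ?sP // Hc0 /dQ0 addrC //.
  + by case=> c0 Hc0; exists (- c0) => x; rewrite /dQ0 aN Hc0 /dV0 sP opprK addrC.
- move=> f Zf; exists (fun g => f (p g)).
  + move=> m h g; rewrite /dV1 pM.
    have [m' Em'] : exists m', mu m = mu m' by exists m.
    have pm : p (mu m) = 1%g by apply/pker; exists m.
    rewrite pm mul1g pM; have := Zf (p h) (p g); rewrite /dQ1 => /helpZ ->.
    by rewrite opprD addrA addrAC subrr add0r addNr.
  + exists 0 => y; rewrite sP subrr /dQ0 a0 subrr //.
Qed.
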